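(* Let $\Gamma$ be an $(l,2)$-hyperflower on $N$ vertices, with eigenvalues $\lambda_1\le\cdots\le\lambda_N$ of its (signless) normalized Laplacian. Then the spectrum of $\Gamma$ is given by: $0$, with multiplicity $N-l-1$; $1$, with multiplicity at least $l-1$; $\lambda_N>1$; and $\lambda_{N-1}=N-\lambda_N-l+1\geq 1$. In the particular case in which $\#h$ is the same for all $h\in\mathcal{H}$, $\lambda_N=\frac{N-l}{2}+1$ and $\lambda_{N-1}=\frac{N-l}{2}$.
   Context: A hypergraph $\Gamma=(\mathcal{V},\mathcal{H})$ has a finite vertex set $\mathcal{V}=\{v_1,\ldots,v_N\}$ and a set $\mathcal{H}$ of nonempty subsets of $\mathcal{V}$ (hyperedges); standing assumption: no isolated vertices. $\deg(v)$ is the number of hyperedges containing $v$, $D$ the diagonal degree matrix, $A$ the matrix with $A_{ii}=0$ and $A_{ij}=-\#\{h\in\mathcal{H}: v_i,v_j\in h\}$ for $i\ne j$, and the (signless) normalized Laplacian is $L=\mathrm{Id}-D^{-1}A$, whose eigenvalues are real and denoted $\lambda_1\le\cdots\le\lambda_N$; $\#h$ is the cardinality of $h$. An $(l,r)$-hyperflower is a hypergraph whose vertex set is $\mathcal{V}=U\sqcup\mathcal{W}$ with $U=\{v_1,\ldots,v_l\}$ (peripheral vertices) and such that there are $r$ pairwise disjoint nonempty sets $h_1,\ldots,h_r\subseteq\mathcal{W}$ with $\mathcal{H}=\{h_i\cup\{v_j\}: i=1,\ldots,r,\ j=1,\ldots,l\}$ (by the no-isolated-vertex assumption, $\mathcal{W}=h_1\cup\cdots\cup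 h_r$). *)

(* Defs.v *)
From HB Require Import structures.
From mathcomp Require Import all_boot all_order all_algebra.
From mathcomp Require Import reals.
Set Implicit Arguments. Unset Strict Implicit. Unset Printing Implicit Defensive.
Import Order.TTheory GRing.Theory Num.Theory.
Local Open Scope ring_scope.

Definition hyperedges_nonempty (N : nat) (H : {set {set 'I_N}}) : Prop :=
  forall h, h \in H -> h != set0.

Definition no_isolated (N : nat) (H : {set {set 'I_N}}) : Prop :=
  forall v : 'I_N, exists2 h, h \in H & v \in h.

Definition hdeg (N : nat) (H : {set {set 'I_N}}) (v : 'I_N) : nat :=
  #|[set h in H | v \in h]|.

Definition hD (R : realType) (N : nat) (H : {set {set 'I_N}}) : 'M[R]_N :=
  \matrix_(i, j) (if i == j then (hdeg H i)%:R else 0).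

Definition hA (R : realType) (N : nat) (H : {set {set 'I_N}}) : 'M[R]_N :=
  \matrix_(i, j) (if i == j then 0
                  else - (#|[set h in H | (i \in h) && (j \in h)]|)%:R).

Definition hLap (R : realType) (N : nat) (H : {set {set 'I_N}}) : 'M[R]_N :=
  1%:M - invmx (hD R H) *m hA R H.

(* (l,r)-hyperflower with r = 2: U = {v_1,..,v_l}, h1 h2 disjoint nonempty
   subsets of W = V \ U, H = {h_i ∪ {v_j}}. *)
Definition is_hyperflower2 (N l : nat) (H : {set {set 'I_N}}) : Prop :=
  let U := [set i : 'I_N | (i < l)%N] in
  (l <= N)%N /\
  exists h1 h2 : {set 'I_N},
    [/\ H = [set h1 :|: [set u] | u in U] :|: [set h2 :|: [set u] | u in U],
        h1 != set0, h2 != set0,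
        [disjoint h1 & h2] &
        [disjoint h1 :|: h2 & U]].

(* Main.v *)
Require Import Defs.
From HB Require Import structures.
From mathcomp Require Import all_boot all_order all_algebra.
From mathcomp Require Import reals.
From mathcomp Require Import ring lra zify.
From Stdlib Require Import Lia.
Set Implicit Arguments. Unset Strict Implicit. Unset Printing Implicit Defensive.
Import Order.TTheory GRing.Theory Num.Theory.
Local Open Scope ring_scope.
Section Flower.
Variable R : realType.
Variable N : nat.
Variables (U h1 h2 : {set 'I_N}).
Hypothesis cover : forall i, [|| i \in U, i \in h1 | i \in h2].
Hypothesis dis12 : [disjoint h1 & h2].
Hypothesis disU : [disjoint h1 :|: h2 & U].
Variables (u0 w1 w2 : 'I_N).
Hypotheses (u0U : u0 \in U) (w1h : w1 \in h1) (w2h : w2 \in h2).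

Variant cls_spec (i : 'I_N) : bool -> bool -> bool -> Prop :=
| CU : i \in U -> cls_spec i true false false
| C1 : i \in h1 -> cls_spec i false true false
| C2 : i \in h2 -> cls_spec i false false true.

Lemma clsP i : cls_spec i (i \in U) (i \in h1) (i \in h2).
Proof.
have d12 := dis12; have dU := disU.
move: (cover i) => /or3P[iU|i1|i2].
- have i1 : i \in h1 = false.
    by apply/negP=> i1; move/disjointFr: dU => /(_ i); rewrite inE i1 iU => /(_ isT).
  have i2 : i \in h2 = false.
    by apply/negP=> i2; move/disjointFr: dU => /(_ i); rewrite inE i2 orbT iU => /(_ isT).
  by rewrite iU i1 i2; constructor.
- have iU : i \in U = false by move/disjointFr: dU => /(_ i); rewrite inE i1 => /(_ isT).
  have i2 : i \in h2 = false by move/disjointFr: d12 => /(_ i); apply.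
  by rewrite iU i1 i2; constructor.
- have iU : i \in U = false by move/disjointFr: dU => /(_ i); rewrite inE i2 orbT => /(_ isT).
  have i1 : i \in h1 = false by move/disjointFl: d12 => /(_ i); apply.
  by rewrite iU i1 i2; constructor.
Qed.

Lemma big_part (T : Type) (idx : T) (op : Monoid.com_law idx) (F : 'I_N -> T) :
  \big[op/idx]_i F i =
  op (op (\big[op/idx]_(i in U) F i) (\big[op/idx]_(i in h1) F i))
     (\big[op/idx]_(i in h2) F i).
Proof.
rewrite [LHS](bigID (mem U)) /= -[RHS]Monoid.mulmA; congr (op _ _).
rewrite [LHS](bigID (mem h1)) /=; congr (op _ _); apply: eq_bigl => i /=;
by case: clsP.
Qed.

Let l := #|U|.
Let n1 := #|h1|.
Let n2 := #|h2|.

Definition Lm : 'M[R]_N := \matrix_(i, j)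
  if i \in U then (if j \in U then (i == j)%:R else 2^-1)
  else if i \in h1 then (if j \in U then (l%:R)^-1 else if j \in h1 then 1 else 0)
  else (if j \in U then (l%:R)^-1 else if j \in h1 then 0 else 1).

Definition G (a b c : R) (i : 'I_N) : R :=
  if i \in U then a else if i \in h1 then b else c.

Definition sq : R := Num.sqrt (1 + (n1%:R - n2%:R) ^+ 2).
Definition m1 : R := (n1%:R + n2%:R + 1 - sq) / 2.
Definition m2 : R := (n1%:R + n2%:R + 1 + sq) / 2.
Definition ga (m : R) : R := n1%:R * (m - n2%:R).
Definition gb (m : R) : R := 2 * (m - 1) * (m - n2%:R) - n2%:R.
Definition G0 := G (n1%:R * n2%:R) (- n2%:R) (- n1%:R).
Definition G1 := G (ga m1) (gb m1) n1%:R.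
Definition G2 := G (ga m2) (gb m2) n1%:R.

Definition dl (i k : 'I_N) : R := (i == k)%:R.

Definition f (k i : 'I_N) : R :=
  if k \in U then (if k == u0 then G0 i else dl i k - dl i u0)
  else if k \in h1 then (if k == w1 then G1 i else dl i k - dl i w1)
  else (if k == w2 then G2 i else dl i k - dl i w2).

Definition d (k : 'I_N) : R :=
  if k \in U then (if k == u0 then 0 else 1)
  else if k \in h1 then (if k == w1 then m1 else 0)
  else (if k == w2 then m2 else 0).

Definition P : 'M[R]_N := \matrix_(i, k) f k i.


Lemma l_gt0 : (0 < l)%N. Proof. by apply/card_gt0P; exists u0. Qed.
Lemma n1_gt0 : (0 < n1)%N. Proof. by apply/card_gt0P; exists w1. Qed.
Lemma n2_gt0 : (0 < n2)%N. Proof. by apply/card_gt0P; exists w2. Qed.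
Lemma lR_neq0 : (l%:R : R) != 0. Proof. by rewrite pnatr_eq0 -lt0n l_gt0. Qed.
Lemma n1R_neq0 : (n1%:R : R) != 0. Proof. by rewrite pnatr_eq0 -lt0n n1_gt0. Qed.
Lemma n2R_neq0 : (n2%:R : R) != 0. Proof. by rewrite pnatr_eq0 -lt0n n2_gt0. Qed.

Lemma sum_dl (F : 'I_N -> R) k : \sum_j F j * dl j k = F k.
Proof.
rewrite (bigD1 k) //= /dl eqxx mulr1 big1 ?addr0 // => j /negbTE ->.
by rewrite mulr0.
Qed.

Lemma sum_in_eq (S : {set 'I_N}) i (x : R) : i \in S ->
  \sum_(j in S) (i == j)%:R * x = x.
Proof.
move=> iS; rewrite (bigD1 i) //= eqxx mul1r big1 ?addr0 // => j /andP[_].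
by rewrite eq_sym => /negbTE ->; rewrite mul0r.
Qed.

Lemma sum_part (F : 'I_N -> R) : \sum_i F i =
  \sum_(i in U) F i + \sum_(i in h1) F i + \sum_(i in h2) F i.
Proof. exact: (@big_part R 0 +%R F). Qed.

Lemma LmG i a b c : \sum_j Lm i j * G a b c j =
  if i \in U then a + n1%:R * 2^-1 * b + n2%:R * 2^-1 * c
  else if i \in h1 then a + n1%:R * b else a + n2%:R * c.
Proof.
rewrite sum_part.
have eU : \sum_(j in U) Lm i j * G a b c j =
   \sum_(j in U) (if i \in U then (i == j)%:R * a else (l%:R)^-1 * a).
  apply: eq_bigr => j jU; rewrite /G mxE jU.
  by case: clsP.
have e1 : \sum_(j in h1) Lm i j * G a b c j =
   \sum_(j in h1) (if i \in U then 2^-1 * b else if i \in h1 then b else 0).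
  apply: eq_bigr => j jh; rewrite /G mxE; case: (clsP j) jh => // _ _.
  by case: clsP; rewrite ?mul1r ?mul0r.
have e2 : \sum_(j in h2) Lm i j * G a b c j =
   \sum_(j in h2) (if i \in U then 2^-1 * c else if i \in h1 then 0 else c).
  apply: eq_bigr => j jh; rewrite /G mxE; case: (clsP j) jh => // _ _.
  by case: clsP; rewrite ?mul1r ?mul0r.
rewrite eU e1 e2; case: clsP => iS.
- rewrite sum_in_eq // !sumr_const -/n1 -/n2; ring.
- rewrite !sumr_const -/l -/n1 -/n2 -(mulr_natl (_^-1 * a)) mulrA mulfV ?lR_neq0 //; ring.
- rewrite !sumr_const -/l -/n1 -/n2 -(mulr_natl (_^-1 * a)) mulrA mulfV ?lR_neq0 //; ring.
Qed.



Definition qp (m : R) : R :=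
  m ^+ 2 - (n1%:R + n2%:R + 1) * m + (n1%:R + n2%:R) / 2 + n1%:R * n2%:R.

Lemma sq_sqr : sq ^+ 2 = 1 + (n1%:R - n2%:R) ^+ 2.
Proof. by rewrite /sq sqr_sqrtr // addr_ge0 // sqr_ge0. Qed.

Lemma qm1 : qp m1 = 0.
Proof.
have h := sq_sqr.
have -> : qp m1 = (sq ^+ 2 - (1 + (n1%:R - n2%:R) ^+ 2)) / 4 by rewrite /qp /m1; field.
by rewrite h subrr mul0r.
Qed.

Lemma qm2 : qp m2 = 0.
Proof.
have h := sq_sqr.
have -> : qp m2 = (sq ^+ 2 - (1 + (n1%:R - n2%:R) ^+ 2)) / 4 by rewrite /qp /m2; field.
by rewrite h subrr mul0r.
Qed.

Lemma eigG m : qp m = 0 -> forall i,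
  \sum_j Lm i j * G (ga m) (gb m) n1%:R j = G (ga m) (gb m) n1%:R i * m.
Proof.
move=> hq i; rewrite LmG /G; case: (clsP i) => _.
- by rewrite /ga /gb; field.
- apply: subr0_eq.
  have -> : ga m + n1%:R * gb m - gb m * m = -2 * m * qp m by rewrite /ga /gb /qp; field.
  by rewrite hq mulr0.
- rewrite /ga; ring.
Qed.

Lemma eigG0 i : \sum_j Lm i j * G0 j = G0 i * 0.
Proof. rewrite LmG /G0 /G mulr0; case: (clsP i) => _; by field. Qed.

Lemma memNeq (A : {set 'I_N}) x y : x \in A -> y \notin A -> (y == x) = false.
Proof. by move=> xA yA; apply/negbTE; apply: contraNneq yA => ->. Qed.

Lemma sum_diff i k r : \sum_j Lm i j * (dl j k - dl j r) = Lm i k - Lm i r.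
Proof. by under eq_bigr do rewrite mulrBr; rewrite sumrB !sum_dl. Qed.

Lemma eigen : Lm *m P = P *m diag_mx (\row_k d k).
Proof.
apply/matrixP => i k; rewrite mul_mx_diag [LHS]mxE [RHS]mxE [P i k]mxE mxE.
under eq_bigr do rewrite [P _ _]mxE.
rewrite /f /d; case: (clsP k) => kS.
- case: eqP => [_|nk]; first exact: eigG0.
  rewrite sum_diff !mxE kS u0U /dl mulr1.
  case: (clsP i) => iS //.
  + have iU : i \notin U by move: iS; case: clsP.
    by rewrite (memNeq kS iU) (memNeq u0U iU) !subrr.
  + have iU : i \notin U by move: iS; case: clsP.
    by rewrite (memNeq kS iU) (memNeq u0U iU) !subrr.
- case: eqP => [_|nk]; first exact: (eigG qm1).
  rewrite sum_diff !mxE kS w1h mulr0.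
  have ->: (k \in U) = false by move: kS; case: clsP.
  have ->: (w1 \in U) = false by move: w1h; case: clsP.
  by case: (clsP i) => _; rewrite subrr.
- case: eqP => [_|nk]; first exact: (eigG qm2).
  rewrite sum_diff !mxE mulr0.
  have ->: (k \in U) = false by move: kS; case: clsP.
  have ->: (w2 \in U) = false by move: w2h; case: clsP.
  have ->: (k \in h1) = false by move: kS; case: clsP.
  have ->: (w2 \in h1) = false by move: w2h; case: clsP.
  by case: (clsP i) => _; rewrite subrr.
Qed.


Lemma h1_notU i : i \in h1 -> (i \in U) = false. Proof. by case: clsP. Qed.
Lemma h2_notU i : i \in h2 -> (i \in U) = false. Proof. by case: clsP. Qed.
Lemma h2_noth1 i : i \in h2 -> (i \in h1) = false. Proof. by case: clsP. Qed.
Lemma U_noth1 i : i \in U -> (i \in h1) = false. Proof. by case: clsP. Qed.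
Lemma U_noth2 i : i \in U -> (i \in h2) = false. Proof. by case: clsP. Qed.
Lemma h1_noth2 i : i \in h1 -> (i \in h2) = false. Proof. by case: clsP. Qed.

Lemma solve3 (x y m1 m2 Y1 Y2 Y3 : R) : x != 0 -> m1 != m2 -> m1 != 0 -> m2 != 0 ->
  m1 + m2 = x + y + 1 ->
  x * y * Y1 - y * Y2 - x * Y3 = 0 ->
  x * (m1 - y) * Y1 + (2 * (m1 - 1) * (m1 - y) - y) * Y2 + x * Y3 = 0 ->
  x * (m2 - y) * Y1 + (2 * (m2 - 1) * (m2 - y) - y) * Y2 + x * Y3 = 0 ->
  [/\ Y1 = 0, Y2 = 0 & Y3 = 0].
Proof.
move=> x0 m12 m10 m20 hs e0 e1 e2.
have hm2 : m2 = x + y + 1 - m1 by rewrite -hs; ring.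
have A : (m1 - m2) * x * (Y1 + 2 * Y2) = 0.
  rewrite -(subrr 0) -{1}e1 -e2 hm2; ring.
have hY1 : Y1 = - 2 * Y2.
  move/eqP: A; rewrite !mulf_eq0 subr_eq0 (negbTE m12) (negbTE x0) /=.
  by rewrite addr_eq0 => /eqP ->; rewrite mulNr.
have B : - 2 * m1 * m2 * Y2 = 0.
  rewrite -(addr0 0) -{1}e1 -e0 hY1 hm2; ring.
have hY2 : Y2 = 0.
  move/eqP: B; rewrite !mulf_eq0 (negbTE m10) (negbTE m20) /= !orbF.
  case/orP => [/eqP h|/eqP //]; exfalso; move: h; lra.
have hY1' : Y1 = 0 by rewrite hY1 hY2 mulr0.
split => //.
have : x * Y3 = 0 by move: e0; rewrite hY1' hY2 !mulr0; lra.
by move/eqP; rewrite mulf_eq0 (negbTE x0) => /eqP.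
Qed.

Lemma m2_gt0 : 0 < m2.
Proof.
rewrite /m2 divr_gt0 // ltr_wpDr ?sqrtr_ge0 //.
by rewrite ltr_wpDl // addr_ge0.
Qed.

Lemma sq_gt0 : 0 < sq.
Proof. by rewrite /sq sqrtr_gt0 ltr_wpDr ?sqr_ge0. Qed.

Lemma m1_ge1 : 1 <= m1.
Proof.
have h := sq_sqr; have hs := sq_gt0.
have hn1 : 1 <= (n1%:R : R) by rewrite ler1n n1_gt0.
have hn2 : 1 <= (n2%:R : R) by rewrite ler1n n2_gt0.
rewrite /m1 ler_pdivlMr // mul1r.
have : sq ^+ 2 <= (n1%:R + n2%:R - 1) ^+ 2.
  have p1 : 0 <= (n1%:R - 1) * (n2%:R - 1) :> R by apply: mulr_ge0; lra.
  have p2 : 1 <= (n1%:R * n2%:R) :> R by rewrite -natrM ler1n muln_gt0 n1_gt0 n2_gt0.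
  have E : (n1%:R + n2%:R - 1) ^+ 2 - (1 + (n1%:R - n2%:R) ^+ 2) =
    2 * ((n1%:R - 1) * (n2%:R - 1)) + 2 * (n1%:R * n2%:R) - 2 :> R by ring.
  rewrite h -subr_ge0 E; move: p1 p2; generalize (n1%:R : R) (n2%:R : R) => a b p1 p2; nra.
rewrite -subr_ge0 subr_sqr => H.
have : 0 <= n1%:R + n2%:R - 1 - sq.
  have pos : 0 < n1%:R + n2%:R - 1 + sq by lra.
  by move: H; rewrite pmulr_lge0.
lra.
Qed.

Lemma m1_neq_m2 : m1 != m2.
Proof. have := sq_gt0; rewrite /m1 /m2 => h; apply/eqP => e; move: e; lra. Qed.

Lemma sum_m : m1 + m2 = n1%:R + n2%:R + 1.
Proof. by rewrite /m1 /m2; field. Qed.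

Lemma sumG (v : 'I_N -> R) a b c :
  {in U, forall i, v i = v u0} -> {in h1, forall i, v i = v w1} ->
  {in h2, forall i, v i = v w2} ->
  \sum_i v i * G a b c i = l%:R * v u0 * a + n1%:R * v w1 * b + n2%:R * v w2 * c.
Proof.
move=> hU h1' h2'; rewrite sum_part.
rewrite (eq_bigr (fun _ => v u0 * a)); last by move=> i iU; rewrite hU // /G iU.
rewrite [X in _ + X + _](eq_bigr (fun _ => v w1 * b)); last first.
  by move=> i iS; rewrite h1' // /G; case: (clsP i) iS.
rewrite [X in _ + X](eq_bigr (fun _ => v w2 * c)); last first.
  by move=> i iS; rewrite h2' // /G; case: (clsP i) iS.
rewrite !sumr_const -/l -/n1 -/n2 -!(mulr_natl (v _ * _)); ring.
Qed.

Lemma P_inj (v : 'rV[R]_N) : v *m P = 0 -> v = 0.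
Proof.
move=> hv.
have hk k : \sum_i v 0 i * f k i = 0.
  by move/matrixP: hv => /(_ 0 k); rewrite !mxE; under eq_bigr do rewrite mxE.
have cU : {in U, forall i, v 0 i = v 0 u0}.
  move=> k kU; case: (eqVneq k u0) => [->//|nk].
  have := hk k; rewrite /f kU (negbTE nk).
  under eq_bigr do rewrite mulrBr.
  by rewrite sumrB !sum_dl => /eqP; rewrite subr_eq0 => /eqP.
have c1 : {in h1, forall i, v 0 i = v 0 w1}.
  move=> k kS; case: (eqVneq k w1) => [->//|nk].
  have := hk k; rewrite /f kS (negbTE nk).
  have ->: (k \in U) = false by move: kS; case: clsP.
  under eq_bigr do rewrite mulrBr.
  by rewrite sumrB !sum_dl => /eqP; rewrite subr_eq0 => /eqP.
have c2 : {in h2, forall i, v 0 i = v 0 w2}.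
  move=> k kS; case: (eqVneq k w2) => [->//|nk].
  have := hk k; rewrite /f (negbTE nk).
  have ->: (k \in U) = false by move: kS; case: clsP.
  have ->: (k \in h1) = false by move: kS; case: clsP.
  under eq_bigr do rewrite mulrBr.
  by rewrite sumrB !sum_dl => /eqP; rewrite subr_eq0 => /eqP.
have e0 := hk u0; rewrite /f u0U eqxx /G0 (sumG (v := fun i => v 0 i)) // in e0.
have e1 := hk w1; rewrite /f w1h eqxx in e1.
rewrite (h1_notU w1h) in e1.
rewrite /G1 (sumG (v := fun i => v 0 i)) // in e1.
have e2 := hk w2; rewrite /f eqxx in e2.
rewrite (h2_notU w2h) (h2_noth1 w2h) in e2.
rewrite /G2 (sumG (v := fun i => v 0 i)) // in e2.
have [] := solve3 n1R_neq0 m1_neq_m2 _ _ sum_m (Y1 := l%:R * v 0 u0) (Y2 := n1%:R * v 0 w1)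
   (Y3 := n2%:R * v 0 w2).
- by have := m1_ge1; apply: contraTneq => ->; rewrite ler10.
- by have := m2_gt0; apply: contraTneq => ->; rewrite ltxx.
- by rewrite -[RHS]e0; ring.
- by rewrite -[RHS]e1 /ga /gb; ring.
- by rewrite -[RHS]e2 /ga /gb; ring.
move=> /eqP a /eqP b /eqP c.
move: a b c; rewrite !mulf_eq0 (negbTE lR_neq0) (negbTE n1R_neq0) (negbTE n2R_neq0) /=.
move=> /eqP a /eqP b /eqP c.
apply/rowP => i; rewrite !mxE.
case: (clsP i) => iS; [rewrite cU | rewrite c1 | rewrite c2] => //.
Qed.

Lemma P_unit : P \in unitmx.
Proof.
rewrite -row_free_unit -kermx_eq0; apply/eqP/row_matrixP => i.
by rewrite row0; apply: P_inj; rewrite -row_mul mulmx_ker row0.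
Qed.


Lemma N_eq : N = (l + n1 + n2)%N.
Proof.
have := (@big_part nat 0 addn (fun _ => 1%N)).
by rewrite /= !sum1_card card_ord.
Qed.

Lemma prod_nseq (F : R -> {poly R}) n a : \prod_(x <- nseq n a) F x = F a ^+ n.
Proof. by elim: n => [|n IH]; rewrite ?big_nil ?expr0 // big_cons IH exprS. Qed.

Lemma prod_class (S : {set 'I_N}) (r : 'I_N) (F : 'I_N -> {poly R}) c :
  r \in S -> {in S, forall k, k != r -> F k = c} ->
  \prod_(k in S) F k = F r * c ^+ (#|S| - 1).
Proof.
move=> rS hF; rewrite (big_setD1 r) //=; congr (_ * _).
rewrite (eq_bigr (fun _ => c)); last first.
  by move=> k; rewrite !inE => /andP[kr kS]; rewrite hF.
by rewrite prodr_const (cardsD1 r S) rS add1n subn1.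
Qed.



Lemma char_poly_sim n (A B Q : 'M[R]_n) : Q \in unitmx -> A *m Q = Q *m B ->
  char_poly A = char_poly B.
Proof.
move=> Qu hAB.
set Qp := map_mx polyC Q.
have hc : char_poly_mx A *m Qp = Qp *m char_poly_mx B.
  rewrite /char_poly_mx mulmxBl mulmxBr scalar_mxC.
  by rewrite /Qp -!map_mxM hAB.
have := congr1 determinant hc; rewrite !det_mulmx.
have hQ : \det Qp != 0.
  by rewrite /Qp det_map_mx polyC_eq0 -unitfE -unitmxE.
by rewrite [RHS]mulrC => /(mulIf hQ).
Qed.

Definition seqs : seq R := nseq (n1 + n2 - 1) 0 ++ nseq (l - 1) 1 ++ [:: m1; m2].

Lemma char_Lm : char_poly Lm = \prod_(x <- seqs) ('X - x%:P).
Proof.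
rewrite (char_poly_sim P_unit eigen) char_poly_trig ?diag_mx_is_trig //.
rewrite (eq_bigr (fun i => 'X - (d i)%:P)); last by move=> i _; rewrite /diag_mx !mxE eqxx mulr1n.
rewrite (@big_part {poly R} 1 *%R).
rewrite (@prod_class U u0 _ ('X - 1%:P)) //; last first.
  by move=> k kU nk; rewrite /d kU (negbTE nk).
rewrite (@prod_class h1 w1 _ ('X - 0%:P)) //; last first.
  by move=> k kS nk; rewrite /d (h1_notU kS) kS (negbTE nk).
rewrite (@prod_class h2 w2 _ ('X - 0%:P)) //; last first.
  by move=> k kS nk; rewrite /d (h2_notU kS) (h2_noth1 kS) (negbTE nk).
rewrite /d u0U eqxx (h1_notU w1h) w1h eqxx (h2_notU w2h) (h2_noth1 w2h) eqxx.
rewrite /seqs !big_cat /= !prod_nseq !big_cons big_nil -/l -/n1 -/n2.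
have -> : (n1 + n2 - 1 = (n1 - 1) + (n2 - 1) + 1)%N.
  by have := n1_gt0; have := n2_gt0; lia.
rewrite !exprD expr1; ring.
Qed.


Definition Hs : {set {set 'I_N}} :=
  [set h1 :|: [set u] | u in U] :|: [set h2 :|: [set u] | u in U].

Lemma img_filter (hk : {set 'I_N}) (P : pred {set 'I_N}) :
  (forall u, u \in U -> u \notin hk) ->
  #|[set h in [set hk :|: [set u] | u in U] | P h]| = #|[set u in U | P (hk :|: [set u])]|.
Proof.
move=> hU.
have -> : [set h in [set hk :|: [set u] | u in U] | P h] =
          [set hk :|: [set u] | u in [set u in U | P (hk :|: [set u])]].
  apply/setP => h; rewrite !inE; apply/andP/imsetP.
  - by case=> /imsetP[u uU ->] Ph; exists u => //; rewrite inE uU.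
  - case=> u; rewrite inE => /andP[uU Pu] ->; split => //.
    by apply/imsetP; exists u.
apply: card_in_imset => u v; rewrite !inE => /andP[uU _] /andP[vU _] e.
have : u \in hk :|: [set u] by rewrite !inE eqxx orbT.
by rewrite e !inE (negbTE (hU u uU)) /= => /eqP.
Qed.

Lemma cnt_eq (P : pred {set 'I_N}) : #|[set h in Hs | P h]| =
  (#|[set u in U | P (h1 :|: [set u])]| + #|[set u in U | P (h2 :|: [set u])]|)%N.
Proof.
have -> : [set h in Hs | P h] =
   [set h in [set h1 :|: [set u] | u in U] | P h] :|:
   [set h in [set h2 :|: [set u] | u in U] | P h].
  by apply/setP => h; rewrite !inE andb_orl.
rewrite cardsU !img_filter; last 2 first.
- by move=> u uU; rewrite U_noth2.
- by move=> u uU; rewrite U_noth1.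
suff -> : [set h in [set h1 :|: [set u] | u in U] | P h] :&:
          [set h in [set h2 :|: [set u] | u in U] | P h] = set0 by rewrite cards0 subn0.
apply/setP => h; rewrite !inE.
apply/negP => /andP[/andP[/imsetP[u uU ->] _] /andP[/imsetP[v vU e] _]].
have : w1 \in h1 :|: [set u] by rewrite !inE w1h.
rewrite e !inE (h1_noth2 w1h) /= => /eqP ew.
by move: w1h; rewrite ew U_noth1.
Qed.

Lemma card_eq1 x : x \in U -> #|[set u in U | u == x]| = 1%N.
Proof.
move=> xU; rewrite -(cards1 x); apply: eq_card => u; rewrite !inE.
by case: (eqVneq u x) => [->|]; rewrite ?xU ?andbF.
Qed.

Lemma card_false : #|[set u in U | false]| = 0%N.
Proof. by apply: eq_card0 => u; rewrite !inE andbF. Qed.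

Lemma card_true : #|[set u in U | true]| = l.
Proof. by apply: eq_card => u; rewrite !inE andbT. Qed.


Lemma card_ext (Q Q' : pred 'I_N) : {in U, Q =1 Q'} ->
  #|[set u in U | Q u]| = #|[set u in U | Q' u]|.
Proof.
move=> hQ; apply: eq_card => u; rewrite !inE.
by case uU: (u \in U) => //=; rewrite hQ.
Qed.

Definition cnt (i j : 'I_N) := #|[set h in Hs | (i \in h) && (j \in h)]|.

Ltac solve_pt iS jS :=
  let u := fresh "u" in let uU := fresh "uU" in
  move=> u uU; rewrite !inE;
  try rewrite (U_noth1 iS); try rewrite (U_noth2 iS); try rewrite iS;
  try rewrite (h1_noth2 iS); try rewrite (h2_noth1 iS);
  try rewrite (U_noth1 jS); try rewrite (U_noth2 jS); try rewrite jS;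
  try rewrite (h1_noth2 jS); try rewrite (h2_noth1 jS);
  try rewrite (memNeq uU (negbT (h1_notU iS)));
  try rewrite (memNeq uU (negbT (h2_notU iS)));
  try rewrite (memNeq uU (negbT (h1_notU jS)));
  try rewrite (memNeq uU (negbT (h2_notU jS)));
  rewrite ?andbT ?andbF ?orbF ?orbT ?andbb ?(eq_sym u) ?orFb ?orbF /=.

Lemma cntE i j : cnt i j =
  if i \in U then (if j \in U then (if i == j then 2 else 0) else 1)%N
  else if i \in h1 then (if j \in U then 1 else if j \in h1 then l else 0)%N
  else (if j \in U then 1 else if j \in h1 then 0 else l)%N.
Proof.
rewrite /cnt cnt_eq.
case: (clsP i) => iS; case: (clsP j) => jS.
- case: (eqVneq i j) => [<-|nij].
  + rewrite [X in (X + _)%N](@card_ext _ (fun u => u == i)); last by solve_pt iS jS.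
    by rewrite [X in (_ + X)%N](@card_ext _ (fun u => u == i)) ?card_eq1 //; solve_pt iS jS.
  + rewrite [X in (X + _)%N](@card_ext _ (fun _ => false)); last first.
      solve_pt iS jS.
      by case: (eqVneq i u) => [<-|_] //=; rewrite eq_sym (negbTE nij).
    rewrite [X in (_ + X)%N](@card_ext _ (fun _ => false)) ?card_false //.
    solve_pt iS jS.
    by case: (eqVneq i u) => [<-|_] //=; rewrite eq_sym (negbTE nij).
- rewrite [X in (X + _)%N](@card_ext _ (fun u => u == i)); last by solve_pt iS jS.
  rewrite [X in (_ + X)%N](@card_ext _ (fun _ => false)) ?card_false ?card_eq1 //.
  by solve_pt iS jS.
- rewrite [X in (X + _)%N](@card_ext _ (fun _ => false)); last first.
    by solve_pt iS jS.
  by rewrite [X in (_ + X)%N](@card_ext _ (fun u => u == i)) ?card_false ?card_eq1 //; solve_pt iS jS.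
- rewrite [X in (X + _)%N](@card_ext _ (fun u => u == j)); last by solve_pt iS jS.
  rewrite [X in (_ + X)%N](@card_ext _ (fun _ => false)) ?card_false ?card_eq1 //.
  by solve_pt iS jS.
- rewrite [X in (X + _)%N](@card_ext _ (fun _ => true)); last by solve_pt iS jS.
  rewrite [X in (_ + X)%N](@card_ext _ (fun _ => false)) ?card_false ?card_true ?addn0 //.
  by solve_pt iS jS.
- rewrite [X in (X + _)%N](@card_ext _ (fun _ => false)); last first.
    by solve_pt iS jS.
  rewrite [X in (_ + X)%N](@card_ext _ (fun _ => false)) ?card_false //.
  by solve_pt iS jS.
- rewrite [X in (X + _)%N](@card_ext _ (fun _ => false)); last first.
    by solve_pt iS jS.
  by rewrite [X in (_ + X)%N](@card_ext _ (fun u => u == j)) ?card_false ?card_eq1 //; solve_pt iS jS.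
- rewrite [X in (X + _)%N](@card_ext _ (fun _ => false)); last first.
    by solve_pt iS jS.
  rewrite [X in (_ + X)%N](@card_ext _ (fun _ => false)) ?card_false //.
  by solve_pt iS jS.
- rewrite [X in (X + _)%N](@card_ext _ (fun _ => false)); last first.
    by solve_pt iS jS.
  by rewrite [X in (_ + X)%N](@card_ext _ (fun _ => true)) ?card_false ?card_true //; solve_pt iS jS.
Qed.


Lemma hdegE i : hdeg Hs i = cnt i i.
Proof. by apply: eq_card => h; rewrite !inE andbb. Qed.

Lemma hdeg_neq0 i : ((hdeg Hs i)%:R : R) != 0.
Proof.
rewrite hdegE cntE eqxx; case: (clsP i) => _ /=; [by rewrite pnatr_eq0 | exact: lR_neq0 | exact: lR_neq0].
Qed.

Definition Dinv : 'M[R]_N := diag_mx (\row_i ((hdeg Hs i)%:R)^-1).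

Lemma invD : invmx (hD R Hs) = Dinv.
Proof.
have h : hD R Hs *m Dinv = 1%:M.
  apply/matrixP => i j; rewrite /Dinv mul_mx_diag !mxE.
  case: (eqVneq i j) => [<-|nij]; rewrite ?eqxx ?mulr1n.
    by rewrite mulfV // hdeg_neq0.
  by rewrite ?mulr0n ?mul0r ?mulr0.
have [hu _] := mulmx1_unit h.
by rewrite -[RHS]mul1mx -(mulVmx hu) -mulmxA h mulmx1.
Qed.

Lemma hLapE : hLap R Hs = Lm.
Proof.
apply/matrixP => i j; rewrite /hLap invD /Dinv mul_diag_mx !mxE hdegE.
case: (eqVneq i j) => [<-|nij].
  rewrite ?mulr0 ?subr0 ?mulr1n.
  by case: (clsP i) => iS //=; rewrite ?iS ?eqxx.
rewrite /= mulr0n sub0r mulrN opprK -/(cnt i j) !cntE eqxx (negbTE nij).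
by case: (clsP i) => iS; case: (clsP j) => jS /=; rewrite ?mulr0 ?mulr1 ?mulVf ?lR_neq0.
Qed.


Lemma sorted_nseq_cat (x : R) a t : sorted <=%R t -> all (fun y => x <= y) t ->
  sorted <=%R (nseq a x ++ t).
Proof.
move=> st at'; elim: a => [//|a IH] /=.
rewrite (path_sortedE le_trans) IH andbT all_cat at' andbT.
by apply/allP => y; rewrite mem_nseq => /andP[_ /eqP ->].
Qed.

Lemma m1_lt_m2 : m1 < m2.
Proof. have := sq_gt0; rewrite /m1 /m2 => h; lra. Qed.

Lemma seqs_sorted : sorted <=%R seqs.
Proof.
have hm1 := m1_ge1; have hm2 := m1_lt_m2.
rewrite /seqs; apply: sorted_nseq_cat.
  apply: sorted_nseq_cat => /=; rewrite ?andbT; [exact: ltW | by rewrite hm1 /=; apply: le_trans (ltW hm2)].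
rewrite all_cat /= !andbT; apply/andP; split.
  by apply/allP => y; rewrite mem_nseq => /andP[_ /eqP ->].
apply/andP; split; [apply: le_trans hm1 | apply: le_trans (le_trans hm1 (ltW hm2))] => //.
Qed.

Lemma lam_eq (lam : seq R) : sorted <=%R lam ->
  char_poly Lm = \prod_(x <- lam) ('X - x%:P) -> lam = seqs.
Proof.
move=> so hc; apply: (sorted_eq le_trans le_anti) => //; first exact: seqs_sorted.
by apply: prod_XsubC_eq; rewrite -hc char_Lm.
Qed.

Lemma size_seqs : size seqs = N.
Proof.
rewrite /seqs !size_cat !size_nseq /= N_eq.
by have := l_gt0; have := n1_gt0; have := n2_gt0; lia.
Qed.

Lemma count0_seqs : count_mem (0 : R) seqs = (n1 + n2 - 1)%N.
Proof.
have hm1 := m1_ge1; have hm2 := m1_lt_m2.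
rewrite /seqs !count_cat !count_nseq /= eqxx mul1n.
have -> : ((1 : R) == 0) = false by rewrite oner_eq0.
have -> : (m1 == 0) = false by apply/negbTE; rewrite gt_eqF // (lt_le_trans ltr01 hm1).
have -> : (m2 == 0) = false.
  by apply/negbTE; rewrite gt_eqF // (lt_le_trans ltr01 (le_trans hm1 (ltW hm2))).
by rewrite !addn0.
Qed.

Lemma count1_seqs : (l - 1 <= count_mem (1%R : R) seqs)%N.
Proof.
rewrite /seqs !count_cat !count_nseq /= eqxx mul1n.
by rewrite addnCA leq_addr.
Qed.


Lemma nth_seqs : seqs`_(N.-1) = m2 /\ seqs`_(N.-2) = m1.
Proof.
rewrite /seqs catA; set A := (nseq _ _ ++ nseq _ _).
have sA : size A = N.-2.
  rewrite /A size_cat !size_nseq N_eq.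
  by have := l_gt0; have := n1_gt0; have := n2_gt0; lia.
have e1 : N.-1 = (size A).+1.
  rewrite sA N_eq; by have := l_gt0; have := n1_gt0; have := n2_gt0; lia.
by rewrite e1 /= !nth_cat ltnn subnn ltnNge leqnSn /= subSnn.
Qed.

Lemma m1_rel : m1 = N%:R - m2 - l%:R + 1.
Proof.
have := sum_m; rewrite N_eq !natrD => h.
have -> : m1 = n1%:R + n2%:R + 1 - m2 by rewrite -h; ring.
ring.
Qed.

Lemma eq_case : n1 = n2 ->
  m2 = (N%:R - l%:R) / 2 + 1 /\ m1 = (N%:R - l%:R) / 2.
Proof.
move=> e.
have hs : sq = 1 by rewrite /sq e subrr expr0n /= addr0 sqrtr1.
rewrite N_eq !natrD /m1 /m2 hs e; split; by field.
Qed.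


Lemma flower_main (lam : seq R) : sorted <=%R lam ->
  char_poly (hLap R Hs) = \prod_(x <- lam) ('X - x%:P) ->
  [/\ count_mem (0 : R) lam = (N - l - 1)%N,
      (l - 1 <= count_mem (1%R : R) lam)%N,
      1 < lam`_(N.-1) &
      lam`_(N.-2) = N%:R - lam`_(N.-1) - l%:R + 1 /\ 1 <= lam`_(N.-2)] /\
  (n1 = n2 -> lam`_(N.-1) = (N%:R - l%:R) / 2 + 1 /\
              lam`_(N.-2) = (N%:R - l%:R) / 2).
Proof.
rewrite hLapE => so hc; have -> := lam_eq so hc.
have [e1 e2] := nth_seqs.
rewrite e1 e2; split; last exact: eq_case.
split.
- by rewrite count0_seqs N_eq; have := l_gt0; have := n1_gt0; have := n2_gt0; lia.
- exact: count1_seqs.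
- exact: le_lt_trans m1_ge1 m1_lt_m2.
- split; [exact: m1_rel | exact: m1_ge1].
Qed.

End Flower.

Unset Implicit Arguments.

Lemma card_U (N l : nat) (lN : (l <= N)%N) : #|[set i : 'I_N | (i < l)%N]| = l.
Proof.
have -> : [set i : 'I_N | (i < l)%N] = [set widen_ord lN j | j : 'I_l].
  apply/setP => i; rewrite !inE; apply/idP/imsetP.
  - by move=> il; exists (Ordinal il) => //; apply: val_inj.
  - by case=> j _ ->; rewrite /= ltn_ord.
rewrite card_imset ?card_ord //.
by move=> a b /(congr1 val) /= /val_inj.
Qed.

Theorem mainTheorem5 (R : realType) (N l : nat) (H : {set {set 'I_N}})
  (lam : seq R) :
  is_hyperflower2 l H ->
  no_isolated H ->
  size lam = N ->
  sorted <=%R lam ->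
  char_poly (hLap R H) = \prod_(x <- lam) ('X - x%:P) ->
  [/\ count_mem (0 : R) lam = (N - l - 1)%N,
      (l - 1 <= count_mem (1%R : R) lam)%N,
      1 < lam`_(N.-1) &
      lam`_(N.-2) = N%:R - lam`_(N.-1) - l%:R + 1 /\ 1 <= lam`_(N.-2)] /\
  (
      ((forall h h', h \in H -> h' \in H -> #|h| = #|h'|) ->
         lam`_(N.-1) = (N%:R - l%:R) / 2 + 1 /\
         lam`_(N.-2) = (N%:R - l%:R) / 2)).
Proof.
rewrite /is_hyperflower2 /=.
move=> [lN [h1 [h2 [HE h10 h20 d12 dU]]]] noiso _ so hc.
set U := [set i : 'I_N | (i < l)%N] in HE dU.
have cU : #|U| = l by exact: card_U.
have [w1 w1h] := set0Pn _ h10.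
have [w2 w2h] := set0Pn _ h20.
have cover : forall i, [|| i \in U, i \in h1 | i \in h2].
  move=> i; have [h hH ih] := noiso i; move: hH; rewrite HE inE.
  case/orP => /imsetP[u uU eh]; move: ih; rewrite eh in_setU in_set1.
    by case/orP => [->|/eqP ->]; rewrite ?orbT ?uU.
  by case/orP => [-> | /eqP ->]; rewrite ?uU ?orbT.
have l_gt0 : (0 < l)%N.
  rewrite lt0n; apply/negP => /eqP l0.
  have [h hH _] := noiso w1; move: hH; rewrite HE inE.
  by case/orP => /imsetP[u]; rewrite inE l0.
have N_gt0 : (0 < N)%N by apply: leq_ltn_trans (ltn_ord w1).
set u0 : 'I_N := Ordinal N_gt0.
have u0U : u0 \in U by rewrite inE.
have HEs : H = Hs U h1 h2 by [].
rewrite HEs in hc.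
have [A B] := flower_main cover d12 dU u0U w1h w2h so hc.
rewrite cU in A B; split => // heq; apply: B.
have u0h1 : u0 \notin h1.
  by apply/negP => u1; move/disjointFr: dU => /(_ u0); rewrite inE u1 u0U => /(_ isT).
have u0h2 : u0 \notin h2.
  by apply/negP => u1; move/disjointFr: dU => /(_ u0); rewrite inE u1 orbT u0U => /(_ isT).
have := heq (h1 :|: [set u0]) (h2 :|: [set u0]).
rewrite HEs !inE.
have m1 : h1 :|: [set u0] \in [set h1 :|: [set u] | u in U] by apply/imsetP; exists u0.
have m2 : h2 :|: [set u0] \in [set h2 :|: [set u] | u in U] by apply/imsetP; exists u0.
rewrite m1 m2 orbT => /(_ isT isT).
rewrite ![_ :|: [set u0]]setUC !cardsU1 (negbTE u0h1) (negbTE u0h2).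
by move=> /eqP; rewrite eqn_add2l => /eqP.
Qed.
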